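(* Let $n\ge 2$ and let $R$ be the complex Leibniz algebra with basis $\{h,e_1,\dots,e_n\}$ and nonzero products $[e_i,e_1]=e_{i+1}$ ($1\le i\le n-1$), $[h,e_1]=-e_1$, $[e_i,h]=ie_i$ ($1\le i\le n$). Then $(d,D)$ is a biderivation of $R$ iff there exist $\alpha_1,\alpha_2,\beta_3,\dots,\beta_{n+1}\in\mathbb C$ such that, with the convention $e_{n+1}=0$, $$d(h)=-\alpha_1e_1,\quad d(e_i)=i\alpha_2e_i+\alpha_1e_{i+1}\ (1\le i\le n),$$ $$D(h)=-\alpha_1e_1+\sum_{i=2}^{n-1}i\beta_{i+1}e_i+\beta_{n+1}e_n,\quad D(e_1)=\alpha_2e_1-\alpha_1e_2+\sum_{i=3}^n\beta_ie_i,\quad D(e_i)=0\ (2\le i\le n).$$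
   Context: Leibniz algebras are right Leibniz over $\mathbb C$: $[x,[y,z]]=[[x,y],z]-[[x,z],y]$. Unlisted products are zero. A derivation is a linear $d$ with $d([x,y])=[d(x),y]+[x,d(y)]$; an anti-derivation is a linear $D$ with $D([x,y])=[D(x),y]-[D(y),x]$; a biderivation is a pair $(d,D)$ of a derivation and an anti-derivation with $[x,d(y)]=[x,D(y)]$ for all $x,y$. *)

(* Defs.v *)
From mathcomp Require Import all_boot all_algebra.
From mathcomp Require Import reals complex.
Set Implicit Arguments. Unset Strict Implicit. Unset Printing Implicit Defensive.
Import GRing.Theory Num.Theory.
Local Open Scope ring_scope.

(* The algebra R_n has basis {h, e_1, ..., e_n}; its elements are row vectors
   x : 'rV[C]_(n.+1), where coordinate 0 is the h-coefficient and coordinate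
   i (1 <= i <= n) is the e_i-coefficient.  Linear maps are matrices acting on
   the right: the image of x under f is  x *m f. *)

(* basis vector with index k (k = 0 is h, k = i is e_i); ev n (n+1) = 0,
   which realizes the convention e_{n+1} = 0. *)
Definition ev (C : ringType) (n k : nat) : 'rV[C]_(n.+1) :=
  \row_(j < n.+1) ((nat_of_ord j == k)%:R).

Definition brb (C : ringType) (n i j : nat) : 'rV[C]_(n.+1) :=
  if [&& 1 <= i, i <= n.-1 & j == 1]%N then ev C n i.+1
  else if [&& i == 0 & j == 1]%N then - ev C n 1
  else if [&& 1 <= i, i <= n & j == 0]%N then i%:R *: ev C n i
  else 0.

Definition bracket (C : ringType) (n : nat) (x y : 'rV[C]_(n.+1)) : 'rV[C]_(n.+1) :=
  \sum_(i < n.+1) \sum_(j < n.+1) (x 0 i * y 0 j) *: brb C n i j.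

Definition is_derivation (C : ringType) (n : nat) (d : 'M[C]_(n.+1)) : Prop :=
  forall x y : 'rV[C]_(n.+1),
    bracket (x *m d) y + bracket x (y *m d) = bracket x y *m d.

Definition is_antiderivation (C : ringType) (n : nat) (D : 'M[C]_(n.+1)) : Prop :=
  forall x y : 'rV[C]_(n.+1),
    bracket x y *m D = bracket (x *m D) y - bracket (y *m D) x.

Definition is_biderivation (C : ringType) (n : nat) (d D : 'M[C]_(n.+1)) : Prop :=
  [/\ is_derivation d, is_antiderivation D &
      forall x y : 'rV[C]_(n.+1), bracket x (y *m d) = bracket x (y *m D)].

(* Main.v *)
Require Import Defs.
From mathcomp Require Import all_boot all_algebra.
From mathcomp Require Import reals complex.
From mathcomp Require Import ring zify.
Import GRing.Theory Num.Theory.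
Local Open Scope ring_scope.

Section S.
Variable (C : numFieldType) (n : nat).
Hypothesis hn : (1 < n)%N.
Let hn1 : (1 <= n)%N := ltnW hn.
Let hn2 : (2 <= n)%N := hn.
Lemma leq_ord' (j : 'I_n.+1) : ((j:nat) <= n)%N. Proof. by rewrite -ltnS. Qed.
Local Notation V := 'rV[C]_(n.+1).
Local Notation e := (ev C n).

Definition cf (u : V) (k : nat) : C := u 0 (inord k).

Lemma cf_ev k p : (k <= n)%N -> cf (e p) k = (k == p)%:R.
Proof. by move=> hk; rewrite /cf mxE inordK. Qed.

Lemma rowcf (u v : V) : (forall k, (k <= n)%N -> cf u k = cf v k) -> u = v.
Proof.
move=> H; apply/rowP => j; have := H j (leq_ord j).
by rewrite /cf inord_val (_ : 0 = ord0) // => ->; rewrite (_ : 0 = ord0).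
Qed.

Lemma cfD u v k : cf (u + v) k = cf u k + cf v k. Proof. by rewrite /cf mxE. Qed.
Lemma cfB u v k : cf (u - v) k = cf u k - cf v k. Proof. by rewrite /cf !mxE. Qed.
Lemma cfN u k : cf (- u) k = - cf u k. Proof. by rewrite /cf mxE. Qed.
Lemma cfZ a u k : cf (a *: u) k = a * cf u k. Proof. by rewrite /cf mxE. Qed.
Lemma cf0 k : cf 0 k = 0. Proof. by rewrite /cf mxE. Qed.
Lemma cf_sum m p (F : nat -> V) k :
  cf (\sum_(m <= i < p) F i) k = \sum_(m <= i < p) cf (F i) k.
Proof. by rewrite /cf summxE. Qed.

Lemma ev_gt p : (n < p)%N -> e p = 0.
Proof.
move=> hp; apply/rowP => j; rewrite !mxE.
by have -> : (nat_of_ord j == p) = false by apply/negbTE; rewrite neq_ltn (leq_trans (ltn_ord j) hp).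
Qed.

Lemma sum_delta m p k (c : nat -> C) :
  \sum_(m <= i < p) c i * (k == i)%:R = if (m <= k < p)%N then c k else 0.
Proof.
elim: p => [|p IH]; first by rewrite big_geq // ltn0 andbF.
case: (leqP m p) => hmp.
  rewrite big_nat_recr //= IH.
  case: (eqVneq k p) => [->|hkp].
    by rewrite hmp ltnSn ltnn andbF mulr1 add0r.
  rewrite mulr0 addr0; case: ifP; case: ifP => //; move: hkp => /eqP; lia.
rewrite big_geq //; case: ifP => //; lia.
Qed.


Definition Nm : 'M[C]_(n.+1) := \matrix_(i, j) ((i == j :> nat)%:R * (i : nat)%:R).
Definition Sm : 'M[C]_(n.+1) := \matrix_(i, j)
  (if ((i:nat) == 0%N) && ((j:nat) == 1%N) then -1
   else if (1 <= i)%N && ((j:nat) == i.+1) then 1 else 0).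

Lemma sum_delta_ord (F : 'I_n.+1 -> C) m : (m <= n)%N ->
  \sum_(l < n.+1) F l * ((l:nat) == m)%:R = F (inord m).
Proof.
move=> hm; rewrite (bigD1 (inord m)) //= inordK // eqxx mulr1 big1 ?addr0 //.
move=> l hl; case: eqP; rewrite ?mulr0 // => hlm.
by move: hl; rewrite -val_eqE /= inordK // hlm eqxx.
Qed.

Lemma cf_mul (u : V) M k : (k <= n)%N ->
  cf (u *m M) k = \sum_(j < n.+1) cf u j * M j (inord k).
Proof.
move=> hk; rewrite /cf mxE; apply: eq_bigr => j _; by rewrite inord_val.
Qed.

Lemma NE (u : V) k : (k <= n)%N -> cf (u *m Nm) k = cf u k * k%:R.
Proof.
move=> hk; rewrite cf_mul //.
rewrite (eq_bigr (fun l : 'I_n.+1 => (cf u l * (l:nat)%:R) * ((l:nat) == k)%:R)).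
  rewrite (sum_delta_ord (fun l : 'I_n.+1 => cf u l * (l:nat)%:R)) //.
2: by move=> l _; rewrite mxE inordK //; ring.
by rewrite inordK // /cf inord_val.
Qed.

Lemma SE (u : V) k : (k <= n)%N -> cf (u *m Sm) k =
  if k == 1%N then - cf u 0 else if (2 <= k)%N then cf u k.-1 else 0.
Proof.
move=> hk; rewrite cf_mul //.
rewrite (eq_bigr (fun l : 'I_n.+1 => (- (k == 1%N)%:R * cf u l) * ((l:nat) == 0%N)%:R
           + ((2 <= k)%N%:R * cf u l) * ((l:nat) == k.-1)%:R)); last first.
  move=> l _; rewrite mxE inordK //.
  case: l => l hl /=.
  case: (eqVneq l 0%N) => [->|hl0].
    case: (eqVneq k 1%N) => [->|hk1]; first by rewrite /=; ring.
    rewrite /=.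
    case: k hk hk1 => [|[|k]] //= _ _; ring.
  rewrite /=.
  case: (eqVneq k l.+1) => [->|hkl] /=.
    have -> : (0 < l)%N by rewrite lt0n.
    have -> : (l.+1 == 1%N) = false by case: l hl0 {hl}.
    rewrite /= eqxx /=. have -> : (1 < l.+1)%N by rewrite ltnS lt0n. by rewrite /= !mulr1 mul1r mulr0 add0r.
  rewrite andbF.
  case: (eqVneq l k.-1) => [e1|e2]; last by rewrite /=; ring.
  have -> : (1 < k)%N = false by lia. rewrite /=; ring.
rewrite big_split /= !sum_delta_ord //; last by lia.
rewrite !inordK //; last by lia.
case: (eqVneq k 1%N) => [->|hk1] /=; first by rewrite mul0r addr0 mulN1r.
rewrite oppr0 mul0r add0r; case: ifP => _ /=; by rewrite ?mul1r ?mul0r.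
Qed.

Lemma evN p : e p *m Nm = p%:R *: e p.
Proof.
apply: rowcf => k hk; rewrite NE // cfZ cf_ev //.
by case: (eqVneq k p) => [->|_] /=; rewrite ?mulr1 ?mul1r ?mul0r ?mulr0.
Qed.

Lemma evS p : e p *m Sm = if p == 0%N then - e 1 else e p.+1.
Proof.
apply: rowcf => k hk; rewrite SE //.
case: p => [|p] /=; rewrite ?cfN !cf_ev //; try lia.
  case: k hk => [|[|k]] hk //=; by rewrite ?oppr0.
case: k hk => [|[|k]] hk //=; by rewrite ?oppr0.
Qed.

Lemma evS0 : e 0 *m Sm = - e 1. Proof. by rewrite evS. Qed.
Lemma evSS p : e p.+1 *m Sm = e p.+2. Proof. by rewrite evS. Qed.

Lemma brbE (i l j : 'I_n.+1) :
  brb C n i l 0 j = ((l:nat) == 0%N)%:R * Nm i j + ((l:nat) == 1%N)%:R * Sm i j.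
Proof.
rewrite /Nm /Sm !mxE.
case: i => i hi; case: l => l hl; case: j => j hj /=.
rewrite /brb.
case: l hl => [|[|l]] hl /=; rewrite ?andbF ?andbT ?mul0r ?mul1r ?add0r ?addr0.
- case: ifP => h; rewrite !mxE /=.
  + case: (eqVneq i j) => [->|ne]; first by rewrite ?eqxx /= mulr1 mul1r.
    by rewrite /= mulr0 mul0r.
  + case: (eqVneq i j) => [e1|ne]; last by rewrite mul0r.
    have -> : i = 0%N by lia. by rewrite mulr0.
- case: ifP => h1; rewrite ?mxE /=.
  + have -> : (i == 0%N) = false by lia.
    case: (eqVneq j i.+1) => [->|hj1] /=; first by rewrite (_ : (0 < i)%N) //; lia.
    by case: ifP => //; lia.
  + case: (eqVneq i 0%N) => [->|hi0] /=.
      by rewrite !mxE /=; case: (j == 1%N) => /=; rewrite ?oppr0.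
    rewrite mxE. case: ifP => //. lia.
- by rewrite mxE.
Qed.


Lemma bracketM (x y : V) :
  bracket x y = cf y 0 *: (x *m Nm) + cf y 1 *: (x *m Sm).
Proof.
apply/rowP => j.
rewrite /bracket summxE.
have Hy : forall m, (m <= n)%N -> \sum_(l < n.+1) y 0 l * ((l:nat) == m)%:R = cf y m.
  move=> m hm; rewrite (sum_delta_ord (fun l => y 0 l)) //.
rewrite (eq_bigr (fun i : 'I_n.+1 => x 0 i * Nm i j * cf y 0 + x 0 i * Sm i j * cf y 1)); last first.
  move=> i _; rewrite summxE.
  rewrite (eq_bigr (fun l : 'I_n.+1 => x 0 i * Nm i j * (y 0 l * ((l:nat) == 0%N)%:R)
                 + x 0 i * Sm i j * (y 0 l * ((l:nat) == 1%N)%:R))); last first.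
    by move=> l _; rewrite mxE brbE; ring.
  by rewrite big_split /= -!mulr_sumr !Hy //; lia.
rewrite big_split /= !mxE -!mulr_suml !mulr_sumr.
by rewrite mulrC [X in _ + X = _]mulrC !mulr_sumr.
Qed.

Lemma natrF : (false%:R : C) = 0. Proof. by []. Qed.
Lemma natrT : (true%:R : C) = 1. Proof. by []. Qed.

Lemma cfe0 p : cf (e p) 0 = (p == 0%N)%:R.
Proof. by rewrite cf_ev // eq_sym. Qed.
Lemma cfe1 p : cf (e p) 1 = (p == 1%N)%:R.
Proof. rewrite cf_ev; [by rewrite eq_sym | lia]. Qed.

Lemma cf_sum_ev m p (c : nat -> C) k : (k <= n)%N ->
  cf (\sum_(m <= i < p) c i *: e i) k = if (m <= k < p)%N then c k else 0.
Proof.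
move=> hk; rewrite cf_sum -sum_delta; apply: eq_bigr => i _; by rewrite cfZ cf_ev.
Qed.

Lemma nat_cancel (x : C) k a : k != a -> x * k%:R = a%:R * x -> x = 0.
Proof.
move=> hka H.
have : x * (k%:R - a%:R) = 0 by rewrite mulrBr H mulrC subrr.
move/eqP; rewrite mulf_eq0 subr_eq0 eqr_nat (negbTE hka) orbF => /eqP //.
Qed.

Lemma natr_neq0 k : (0 < k)%N -> (k%:R : C) != 0.
Proof. by rewrite pnatr_eq0 -lt0n. Qed.

Section Fwd.
Variables d D : 'M[C]_(n.+1).
Hypothesis Hb : is_biderivation d D.

Local Notation dd a k := (cf (e a *m d) k).
Local Notation DD a k := (cf (e a *m D) k).

Lemma D0 a k : (k <= n)%N ->
  dd a k * k%:R + dd 0 0 * cf (e a *m Nm) k + dd 0 1 * cf (e a *m Sm) k = a%:R * dd a k.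
Proof.
move=> hk; case: Hb => Hd _ _.
have := congr1 (cf^~ k) (Hd (e a) (e 0)).
rewrite !bracketM !cfe0 !cfe1 /= !scale1r !scale0r !addr0.
rewrite evN -scalemxAl !cfD !cfZ NE // => <-.
by rewrite addrA.
Qed.

Lemma D1 a k : (k <= n)%N ->
  cf (e a *m d *m Sm) k + dd 1 0 * cf (e a *m Nm) k + dd 1 1 * cf (e a *m Sm) k
  = cf (e a *m Sm *m d) k.
Proof.
move=> hk; case: Hb => Hd _ _.
have := congr1 (cf^~ k) (Hd (e a) (e 1)).
rewrite !bracketM !cfe0 !cfe1 /= !scale1r !scale0r !add0r.
by rewrite !cfD !cfZ addrA.
Qed.

Lemma A0 b k : (2 <= b)%N -> (k <= n)%N -> DD b k * k%:R = 0.
Proof.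
move=> hb hk; case: Hb => _ HD _.
have := congr1 (cf^~ k) (HD (e 0) (e b)).
rewrite !bracketM !cfe0 !cfe1 /=.
have -> : (b == 0%N) = false by lia.
have -> : (b == 1%N) = false by lia.
rewrite /= !scale0r !addr0 mul0mx scale1r cf0 add0r cfN NE //.
by move/eqP; rewrite eq_sym oppr_eq0 => /eqP.
Qed.

Lemma A1 k : (k <= n)%N -> - DD 1 k = cf (e 0 *m D *m Sm) k - DD 1 k * k%:R.
Proof.
move=> hk; case: Hb => _ HD _.
have := congr1 (cf^~ k) (HD (e 0) (e 1)).
rewrite !bracketM !cfe0 !cfe1 /=.
rewrite !scale0r !add0r !scale1r addr0 evS /= mulNmx cfN cfB NE //.
Qed.

Lemma B01 a : (a <= n)%N -> dd a 0 = DD a 0 /\ dd a 1 = DD a 1.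
Proof.
move=> ha; case: Hb => _ _ HB.
have := HB (e 1) (e a).
rewrite !bracketM evN evS /= scale1r => H.
have H1 := congr1 (cf^~ 1%N) H; have H2 := congr1 (cf^~ 2%N) H.
move: H1 H2; rewrite !cfD !cfZ !cf_ev //= ?mulr1 ?mulr0 ?addr0 ?add0r //; lia.
Qed.


Lemma F00 : dd 0 0 = 0.
Proof.
have := D0 1 1 (ltnW hn).
rewrite evN evS /= cfZ !cf_ev //= ?mulr1n ?mulr0n !mulr1 !mulr0 !addr0 !mul1r => H.
by apply: (addrI (cf (e 1 *m d) 1)); rewrite addr0 H.
Qed.

Lemma Fa0 k : (2 <= k)%N -> (k <= n)%N -> dd 0 k = 0.
Proof.
move=> h2 hk; have := D0 0 k hk.
rewrite F00 evS /= cfN cf_ev //.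
have -> : (k == 1%N) = false by lia.
rewrite /= ?mulr1n ?mulr0n !mul0r oppr0 mulr0 !addr0 => H.
apply: (@nat_cancel _ k 0%N); [lia | by rewrite H mul0r].
Qed.

Lemma Fak a k : (1 <= a)%N -> (k <= n)%N -> k != a -> k != a.+1 -> dd a k = 0.
Proof.
move=> ha hk hka hka1; have := D0 a k hk.
rewrite F00 evS /=.
have -> : (a == 0%N) = false by lia.
rewrite cf_ev // (negbTE hka1) /= mulr0 mul0r !addr0.
exact: nat_cancel.
Qed.

Lemma Fa1 a : (1 <= a)%N -> (a < n)%N -> dd a a.+1 = - dd 0 1.
Proof.
move=> ha han; have := D0 a a.+1 han.
rewrite F00 evS /=.
have -> : (a == 0%N) = false by lia.
rewrite cf_ev // eqxx /= mulr1 mul0r addr0 -natr1 => H.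
transitivity (cf (e a *m d) a.+1 * (a%:R + 1) + cf (e 0 *m d) 1 - a%:R * cf (e a *m d) a.+1 - cf (e 0 *m d) 1); first ring.
by rewrite H; ring.
Qed.

Lemma F10 : dd 1 0 = 0.
Proof.
apply: (@nat_cancel _ 0 1) => //.
have := D0 1 0 (leq0n _).
rewrite F00 evS /= cf_ev //= !mulr0 !mul0r !addr0 => <-. by [].
Qed.

Lemma Faa a : (1 <= a)%N -> (a <= n)%N -> dd a a = a%:R * dd 1 1.
Proof.
elim: a => [//|a IH] _ han.
case: (eqVneq a 0%N) => [->|ha0]; first by rewrite mul1r.
have ha : (1 <= a)%N by rewrite lt0n.
have := D1 a a.+1 han.
rewrite SE //=; have -> : (a.+1 == 1%N) = false by lia.
rewrite evN evS /=; have -> : (a == 0%N) = false by lia.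
rewrite cfZ !cf_ev // eqxx /=.
have -> : (a.+1 == a) = false by lia.
rewrite IH //; last lia.
have -> : (1 < a.+1)%N by lia.
rewrite /= mulr0 mulr0 addr0 mulr1 => <-.
by rewrite -natr1 mulrDl mul1r.
Qed.

Lemma FDb b k : (2 <= b)%N -> (b <= n)%N -> (k <= n)%N -> DD b k = 0.
Proof.
move=> hb hbn hk.
case: (eqVneq k 0%N) => [->|hk0].
  case: (B01 b hbn) => <- _; apply: Fak => //; lia.
have hk' : (k%:R : C) != 0 by apply: natr_neq0; lia.
by have := A0 b k hb hk => /eqP; rewrite mulf_eq0 (negbTE hk') orbF => /eqP.
Qed.

Lemma FDA i : (1 <= i)%N -> (i < n)%N -> DD 0 i = i%:R * DD 1 i.+1.
Proof.
move=> hi hin; have := A1 i.+1 hin.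
rewrite SE //; have -> : (i.+1 == 1%N) = false by lia.
have -> : (1 < i.+1)%N by lia.
rewrite /= -natr1 => H.
transitivity ((DD 0 i - DD 1 i.+1 * (i%:R + 1)) + DD 1 i.+1 * (i%:R + 1)); first by ring.
by rewrite -H; ring.
Qed.

Definition beta (i : nat) := if i == n.+1 then DD 0 n else DD 1 i.

Lemma R0 : e 0 *m d = - (- dd 0 1) *: e 1.
Proof.
apply: rowcf => k hk; rewrite cfZ cf_ev // opprK.
case: k hk => [|[|k]] hk /=; rewrite ?mulr0 ?F00 ?mulr1 //.
by rewrite Fa0.
Qed.

Lemma Ri i : (1 <= i <= n)%N ->
  e i *m d = (i%:R * dd 1 1) *: e i + (- dd 0 1) *: e i.+1.
Proof.
move=> /andP [hi hin]; apply: rowcf => k hk; rewrite cfD !cfZ !cf_ev //.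
case: (eqVneq k i) => [->|hki].
  have -> : (i == i.+1) = false by lia.
  by rewrite /= mulr1 mulr0 addr0 Faa.
case: (eqVneq k i.+1) => [ek|hki1].
  subst k; rewrite /= ?mulr1n ?mulr0n mulr1 mulr0 add0r Fa1 //.
by rewrite /= !natrF !mulr0 addr0 Fak.
Qed.

Lemma RD0 : e 0 *m D = - (- dd 0 1) *: e 1
                        + \sum_(2 <= i < n) (i%:R * beta i.+1) *: e i
                        + beta n.+1 *: e n.
Proof.
apply: rowcf => k hk; rewrite !cfD !cfZ cf_sum_ev // !cf_ev // opprK.
case: (eqVneq k 0%N) => [->|hk0].
  case: (B01 0 (leq0n _)) => <- _; rewrite F00 /=.
  have -> : (0 == n) = false by lia. by rewrite !mulr0 !addr0.
case: (eqVneq k 1%N) => [->|hk1].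
  case: (B01 0 (leq0n _)) => _ <-; rewrite /=.
  have -> : (1 == n) = false by lia. by rewrite !mulr0 !addr0 mulr1.
case: (eqVneq k n) => [->|hkn].
  rewrite /beta eqxx /=.
  by rewrite ltnn andbF ?natrF ?natrT mulr0 !add0r mulr1.
rewrite /= mulr0 add0r mulr0 addr0.
have -> : (2 <= k < n)%N by lia.
rewrite /beta; have -> : (k.+1 == n.+1) = false by lia.
rewrite FDA //; lia.
Qed.

Lemma RD1 : e 1 *m D = dd 1 1 *: e 1 - (- dd 0 1) *: e 2
                        + \sum_(3 <= i < n.+1) beta i *: e i.
Proof.
apply: rowcf => k hk; rewrite !cfD cfN !cfZ cf_sum_ev // !cf_ev //.
case: (eqVneq k 0%N) => [->|hk0].
  case: (B01 1 hn1) => <- _; rewrite F10 /=. by rewrite !mulr0 oppr0 !addr0.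
case: (eqVneq k 1%N) => [->|hk1].
  case: (B01 1 hn1) => _ <-; rewrite /=. by rewrite !mulr0 mulr1 oppr0 !addr0.
case: (eqVneq k 2%N) => [->|hk2].
  rewrite /= mulr0 mulr1 add0r addr0 opprK.
  have := FDA 1 (leqnn _) hn; rewrite mul1r => <-.
  by case: (B01 0 (leq0n _)) => _ <-.
rewrite /= !mulr0 oppr0 !add0r.
have -> : (3 <= k < n.+1)%N by lia.
rewrite /beta; have -> : (k == n.+1) = false by lia. by [].
Qed.

Lemma RDi i : (2 <= i <= n)%N -> e i *m D = 0.
Proof.
move=> /andP [hi hin]; apply: rowcf => k hk; rewrite cf0 FDb //.
Qed.
End Fwd.

Lemma ev_mulE (i : 'I_n.+1) (A : 'M[C]_(n.+1)) : e i *m A = row i A.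
Proof.
apply/rowP => c; rewrite !mxE.
rewrite (eq_bigr (fun j : 'I_n.+1 => A j c * ((j:nat) == i)%:R)); last first.
  by move=> j _; rewrite mxE mulrC.
by rewrite (sum_delta_ord (fun j => A j c)) ?leq_ord' // inord_val.
Qed.

Lemma cf_evM (j k : nat) (A : 'M[C]_(n.+1)) : (j <= n)%N ->
  cf (e j *m A) k = A (inord j) (inord k).
Proof.
move=> hj; have -> : e j = e (inord j : 'I_n.+1) by rewrite inordK.
by rewrite ev_mulE /cf mxE.
Qed.

Lemma mx_rows (A B : 'M[C]_(n.+1)) :
  (forall p, (p <= n)%N -> e p *m A = e p *m B) -> A = B.
Proof.
move=> H; apply/row_matrixP => i.
by rewrite -!ev_mulE; apply: H; rewrite -ltnS.
Qed.

Lemma col_comb (y : V) (M : 'M[C]_(n.+1)) c p q : (c <= n)%N ->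
  (forall j, (j <= n)%N -> cf (e j *m M) c = (j == 0%N)%:R * p + (j == 1%N)%:R * q) ->
  cf (y *m M) c = cf y 0 * p + cf y 1 * q.
Proof.
move=> hc H; rewrite cf_mul //.
rewrite (eq_bigr (fun j : 'I_n.+1 => (cf y j * p) * ((j:nat) == 0%N)%:R
                   + (cf y j * q) * ((j:nat) == 1%N)%:R)); last first.
  move=> j _; rewrite -[M j _]/(M j (inord c)).
  have := H j (leq_ord' j); rewrite cf_evM ?leq_ord' // inord_val => ->; ring.
rewrite big_split /= !(sum_delta_ord (fun j : 'I_n.+1 => _)) //.
by rewrite !inordK.
Qed.

Definition Lift (p : nat) (v : V) : 'M[C]_(n.+1) :=
  \matrix_(i, j) (((i:nat) == p)%:R * v 0 j).

Lemma xLift p (v : V) x : (p <= n)%N -> x *m Lift p v = cf x p *: v.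
Proof.
move=> hp; apply: rowcf => k hk; rewrite cf_mul // cfZ.
rewrite (eq_bigr (fun j : 'I_n.+1 => (cf v k * cf x j) * ((j:nat) == p)%:R)); last first.
  by move=> j _; rewrite mxE; rewrite /cf; ring.
by rewrite sum_delta_ord // inordK // mulrC.
Qed.

Section Bwd.
Variables (d D : 'M[C]_(n.+1)) (a1 a2 : C) (beta : nat -> C).
Hypothesis H0 : e 0 *m d = - a1 *: e 1.
Hypothesis Hi : forall i : nat, (1 <= i <= n)%N ->
           e i *m d = (i%:R * a2) *: e i + a1 *: e i.+1.
Hypothesis HD0 : e 0 *m D = - a1 *: e 1
                        + \sum_(2 <= i < n) (i%:R * beta i.+1) *: e i
                        + beta n.+1 *: e n.
Hypothesis HD1 : e 1 *m D = a2 *: e 1 - a1 *: e 2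
                        + \sum_(3 <= i < n.+1) beta i *: e i.
Hypothesis HDi : forall i : nat, (2 <= i <= n)%N -> e i *m D = 0.

Lemma Hi' i : (1 <= i)%N -> e i *m d = (i%:R * a2) *: e i + a1 *: e i.+1.
Proof.
move=> hi; case: (leqP i n) => hin; first by apply: Hi; rewrite hi.
by rewrite !ev_gt ?mul0mx ?scaler0 ?addr0 //; lia.
Qed.

Lemma HDi' i : (2 <= i)%N -> e i *m D = 0.
Proof.
move=> hi; case: (leqP i n) => hin; first by apply: HDi; rewrite hi.
by rewrite ev_gt ?mul0mx.
Qed.

Lemma cD0 k : (k <= n)%N -> cf (e 0 *m D) k =
  - a1 * (k == 1%N)%:R + (if (2 <= k < n)%N then k%:R * beta k.+1 else 0) + beta n.+1 * (k == n)%:R.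
Proof. by move=> hk; rewrite HD0 !cfD !cfZ cf_sum_ev // !cf_ev. Qed.

Lemma cD1 k : (k <= n)%N -> cf (e 1 *m D) k =
  a2 * (k == 1%N)%:R - a1 * (k == 2%N)%:R + (if (3 <= k < n.+1)%N then beta k else 0).
Proof. by move=> hk; rewrite HD1 !cfD cfN !cfZ cf_sum_ev // !cf_ev. Qed.

Lemma KeyD : e 1 *m D = e 1 *m D *m Nm - e 0 *m D *m Sm.
Proof.
apply: rowcf => k hk; rewrite cfB NE // SE // cD1 //.
case: k hk => [|[|[|m]]] hk /=; rewrite ?natrF ?natrT.
- ring.
- rewrite cD0 // /=; have -> : (0 == n) = false by lia.
  rewrite ?natrF ?natrT; ring.
- rewrite cD0 // /=; have -> : (1 == n) = false by lia.
  rewrite ?natrF ?natrT; ring.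
- have -> : (m.+3 < n.+1)%N by lia.
  rewrite cD0; last lia.
  have -> : (2 <= m.+2 < n)%N by lia.
  have -> : (m.+2 == n) = false by lia.
  rewrite /= ?natrF ?natrT -(natr1 (R:=C) m.+2); ring.
Qed.


Ltac vec := apply: rowcf => ? ?; rewrite ?cfB ?cfD ?cfN ?cfZ ?cf0 ?cfB ?cfD ?cfN ?cfZ; ring.

Lemma MN : Nm *m D = D *m Nm - Lift 0 (e 0 *m D *m Nm) - Lift 1 (e 0 *m D *m Sm).
Proof.
apply: mx_rows => p hp.
rewrite !mulmxBr !xLift // mulmxA evN -scalemxAl mulmxA !cfe0 !cfe1.
case: p hp => [|[|p]] hp /=.
- rewrite ?natrF ?natrT; vec.
- rewrite ?natrF ?natrT. rewrite {1}KeyD. vec.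
- rewrite HDi' // mul0mx ?natrF; vec.
Qed.

Lemma MS : Sm *m D = D *m Sm - Lift 0 (e 1 *m D *m Nm) - Lift 1 (e 1 *m D *m Sm).
Proof.
apply: mx_rows => p hp.
rewrite !mulmxBr !xLift // mulmxA evS mulmxA !cfe0 !cfe1.
case: p hp => [|[|p]] hp /=.
- rewrite ?natrF ?natrT mulNmx {1}KeyD. vec.
- rewrite ?natrF ?natrT HDi' //. vec.
- rewrite (HDi' p.+3) // (HDi' p.+2) // mul0mx ?natrF; vec.
Qed.

Lemma dN : d *m Nm = Nm *m d + a1 *: Sm.
Proof.
apply: mx_rows => p hp.
rewrite mulmxDr !mulmxA evN -scalemxAl -scalemxAr.
case: p hp => [|p] hp.
- rewrite evS0 H0 -scalemxAl evN. vec.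
- rewrite evSS Hi' // mulmxDl -!scalemxAl !evN -(natr1 (R:=C) p.+1). vec.
Qed.

Lemma dS : d *m Sm = Sm *m d - a2 *: Sm.
Proof.
apply: mx_rows => p hp.
rewrite mulmxBr !mulmxA -scalemxAr.
case: p hp => [|p] hp.
- rewrite !evS0 H0 -[(- a1 *: e 1) *m Sm]scalemxAl evSS mulNmx [e 1 *m d]Hi' //.
  vec.
- rewrite !evSS [e p.+1 *m d]Hi' // [e p.+2 *m d]Hi' // mulmxDl.
  rewrite -[(_ *: e p.+1) *m Sm]scalemxAl -[(a1 *: e p.+2) *m Sm]scalemxAl !evSS.
  rewrite -(natr1 (R:=C) p.+1). vec.
Qed.


Lemma cyd0 (y : V) : cf (y *m d) 0 = 0.
Proof.
rewrite (@col_comb y d 0 0 0) //; first by rewrite !mulr0 addr0.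
move=> j hj; rewrite !mulr0 addr0.
case: j hj => [|j] hj; first by rewrite H0 cfZ cf_ev // mulr0.
by rewrite Hi' // cfD !cfZ !cf_ev // !natrF !mulr0 addr0.
Qed.

Lemma cyd1 (y : V) : cf (y *m d) 1 = cf y 0 * - a1 + cf y 1 * a2.
Proof.
apply: col_comb => // j hj.
case: j hj => [|[|j]] hj; rewrite ?H0 ?Hi' // ?cfD ?cfZ !cf_ev //=; rewrite ?natrF ?natrT; ring.
Qed.

Lemma cyD0 (y : V) : cf (y *m D) 0 = 0.
Proof.
rewrite (@col_comb y D 0 0 0) //; first by rewrite !mulr0 addr0.
move=> j hj; rewrite !mulr0 addr0.
case: j hj => [|[|j]] hj.
- rewrite cD0 //=; have -> : (0 == n) = false by lia. by rewrite !natrF !mulr0 !addr0.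
- by rewrite cD1 //= ?natrF !mulr0 subr0 addr0.
- by rewrite HDi' // cf0.
Qed.

Lemma cyD1 (y : V) : cf (y *m D) 1 = cf y 0 * - a1 + cf y 1 * a2.
Proof.
apply: col_comb => // j hj.
case: j hj => [|[|j]] hj.
- rewrite cD0 //=; have -> : (1 == n) = false by lia. rewrite ?natrF ?natrT; ring.
- rewrite cD1 //= ?natrF ?natrT; ring.
- rewrite HDi' // cf0 /= ?natrF; ring.
Qed.

Lemma yD (y : V) : y *m D = cf y 0 *: (e 0 *m D) + cf y 1 *: (e 1 *m D).
Proof.
apply: rowcf => k hk; rewrite cfD !cfZ.
apply: col_comb => // j hj.
case: j hj => [|[|j]] hj /=; rewrite ?natrF ?natrT.
- ring.
- ring.
- rewrite HDi' // cf0; ring.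
Qed.

Lemma isDer : is_derivation d.
Proof.
move=> x y; rewrite !bracketM cyd0 cyd1 scale0r add0r.
rewrite mulmxDl -!scalemxAl -!mulmxA dN dS mulmxDr mulmxBr -!scalemxAr.
vec.
Qed.

Lemma isAnti : is_antiderivation D.
Proof.
move=> x y; rewrite !bracketM (yD y).
rewrite mulmxDl !mulmxDl -!scalemxAl -!mulmxA MN MS !mulmxBr !xLift //.
rewrite -!mulmxA.
vec.
Qed.

Lemma isBi : is_biderivation d D.
Proof.
split; [exact: isDer | exact: isAnti |].
by move=> x y; rewrite !bracketM cyd0 cyD0 cyd1 cyD1.
Qed.
End Bwd.
End S.

Theorem mainTheorem8 (R : realType) (n : nat) (hn : (2 <= n)%N)
    (d D : 'M[R[i]]_(n.+1)) :
  is_biderivation d D <->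
  exists (a1 a2 : R[i]) (beta : nat -> R[i]),
    [/\ ev _ n 0 *m d = - a1 *: ev _ n 1,
        (forall i : nat, (1 <= i <= n)%N ->
           ev _ n i *m d = (i%:R * a2) *: ev _ n i + a1 *: ev _ n i.+1),
        ev _ n 0 *m D = - a1 *: ev _ n 1
                        + \sum_(2 <= i < n) (i%:R * beta i.+1) *: ev _ n i
                        + beta n.+1 *: ev _ n n,
        ev _ n 1 *m D = a2 *: ev _ n 1 - a1 *: ev _ n 2
                        + \sum_(3 <= i < n.+1) beta i *: ev _ n i
      & (forall i : nat, (2 <= i <= n)%N -> ev _ n i *m D = 0)].
Proof.
split.
- move=> Hb.
  exists (- cf _ n (ev _ n 0 *m d) 1), (cf _ n (ev _ n 1 *m d) 1), (beta _ n D).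
  split.
  + exact: (@R0 _ n hn d D Hb).
  + move=> i hi; exact: (@Ri _ n hn d D Hb i hi).
  + exact: (@RD0 _ n hn d D Hb).
  + exact: (@RD1 _ n hn d D Hb).
  + move=> i hi; exact: (@RDi _ n hn d D Hb i hi).
- case=> a1 [a2] [bt] [H0 Hi HD0 HD1 HDi].
  exact: (@isBi _ n hn d D a1 a2 bt H0 Hi HD0 HD1 HDi).
Qed.
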